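(* There exists a universal $\varepsilon_1>0$ such that for every $0<\varepsilon\le\varepsilon_1$ the following holds. Let $\mathbf{u}=(u^1,\dots,u^m)$ be a viscosity solution to $\Delta\mathbf{u}=|\mathbf{u}|^{p-2}\mathbf{u}$ in $B_1$ such that $$|\mathbf{u}-f^1u_0(x_n)|\le\varepsilon\ \text{in } B_1\qquad\text{and}\qquad |\mathbf{u}|\equiv0\ \text{in } B_1\cap\{x_n<-\varepsilon\}.$$ Then $$|\mathbf{u}|\le u_0\!\left(x_n+\varepsilon^{\frac1{2\kappa}}\right)\ \text{in } B_1\qquad\text{and}\qquad u_0\!\left(x_n-\varepsilon^{\frac1{2\kappa}}\right)\le u^1\ \text{in } B_1\cap\left\{x_n\ge\varepsilon^{\frac1{2\kappa}}\right\}.$$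
   Context: Fix integers $n\ge 2$, $m\ge 1$ and $0<p<1$; universal means depending only on $n,m,p$. Set $\kappa:=\frac{2}{2-p}$, $c_p:=[\kappa(\kappa-1)]^{\frac{1}{p-2}}$, $u_0(t):=c_p(\max\{t,0\})^\kappa$. $f^1$ is the first standard basis vector of $\mathbb{R}^m$. For $\mathbf{u}\in C(\Omega;\mathbb{R}^m)$, $\Omega(\mathbf{u}):=\Omega\cap\{|\mathbf{u}|>0\}$, $\Gamma(\mathbf{u}):=\Omega\cap\partial\Omega(\mathbf{u})$. Viscosity solution: $\mathbf{u}\in C(\Omega;\mathbb{R}^m)$ is a viscosity solution of $\Delta\mathbf{u}=|\mathbf{u}|^{p-2}\mathbf{u}$ in $\Omega$ if (i) $\Delta u^i=|\mathbf{u}|^{p-2}u^i$ in $\Omega(\mathbf{u})$ for all $i$, and (ii) for every $x_0\in\Gamma(\mathbf{u})$ and every $f\in\mathbb{R}^m$, $\langle\mathbf{u},f\rangle$ cannot be touched from below at $x_0$ by a function $\varphi\in C^1$ with $\varphi(x_0)=0$, $|\nabla\varphi(x_0)|\ne0$, such that on $\{\varphi\ne0\}$, $\varphi\in C^2$ and $\Delta\varphi>\varphi^{p-1}\chi_{\{\varphi>0\}}$. *)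

(* Defs.v *)
From HB Require Import structures.
From mathcomp Require Import all_boot all_order all_algebra.
From mathcomp Require Import all_classical all_reals all_analysis.
Set Implicit Arguments. Unset Strict Implicit. Unset Printing Implicit Defensive.
Import Order.TTheory GRing.Theory Num.Theory.
Import numFieldNormedType.Exports.
Local Open Scope classical_set_scope.
Local Open Scope ring_scope.

Section Defs.
Variable R : realType.

Definition dotp k (a b : 'rV[R]_k) : R := \sum_(i < k) a ord0 i * b ord0 i.
Definition enorm k (a : 'rV[R]_k) : R := Num.sqrt (dotp a a).

Definition eball n (x0 : 'rV[R]_n) (r : R) : set 'rV[R]_n :=
  [set x | enorm (x - x0) < r].
Definition B1 n : set 'rV[R]_n := eball 0 1.

(* the last coordinate x_n of x in R^n (0 if n = 0, never used) *)
Definition xn n : 'rV[R]_n -> R :=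
  match n return 'rV[R]_n -> R with
  | 0 => fun _ => 0
  | k.+1 => fun x => x ord0 ord_max
  end.

Definition coord1 m : 'rV[R]_m -> R :=
  match m return 'rV[R]_m -> R with
  | 0 => fun _ => 0
  | k.+1 => fun x => x ord0 ord0
  end.

Definition f1 m : 'rV[R]_m := \row_(i < m) (if val i == 0%N then 1 else 0).

Definition kappa (p : R) : R := 2 / (2 - p).
Definition cp (p : R) : R := powR (kappa p * (kappa p - 1)) (1 / (p - 2)).
Definition u0 (p : R) (t : R) : R := cp p * powR (Num.max t 0) (kappa p).

Definition partial n (i : 'I_n) (g : 'rV[R]_n -> R) : 'rV[R]_n -> R :=
  fun x => 'D_(delta_mx ord0 i) g x.

Definition C1_on n (U : set 'rV[R]_n) (g : 'rV[R]_n -> R) : Prop :=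
  (forall i x, U x -> derivable g x (delta_mx ord0 i)) /\
  (forall i, {within U, continuous (partial i g)}).

Definition C2_on n (U : set 'rV[R]_n) (g : 'rV[R]_n -> R) : Prop :=
  C1_on U g /\ forall i, C1_on U (partial i g).

Definition laplacian n (g : 'rV[R]_n -> R) (x : 'rV[R]_n) : R :=
  \sum_(i < n) partial i (partial i g) x.

Definition posset n m (Om : set 'rV[R]_n) (u : 'rV[R]_n -> 'rV[R]_m) :=
  Om `&` [set x | 0 < enorm (u x)].
Definition freebd n m (Om : set 'rV[R]_n) (u : 'rV[R]_n -> 'rV[R]_m) :=
  Om `&` (closure (posset Om u) `\` interior (posset Om u)).

(* phi touches g from below at x0 (within the ball B_r(x0)) and is an admissible
   strict test function in the sense of condition (ii) *)
Definition bad_test_fn n (p : R) (g : 'rV[R]_n -> R) (x0 : 'rV[R]_n)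
    (r : R) (phi : 'rV[R]_n -> R) : Prop :=
  0 < r /\
  C1_on (eball x0 r) phi /\
  phi x0 = 0 /\
  (exists i, partial i phi x0 != 0) /\
  C2_on (eball x0 r `&` [set x | phi x != 0]) phi /\
      (forall x, eball x0 r x -> phi x != 0 ->
          laplacian phi x > (if 0 < phi x then powR (phi x) (p - 1) else 0)) /\
      (forall x, eball x0 r x -> phi x <= g x).

Definition viscosity_solution n m (p : R) (Om : set 'rV[R]_n)
    (u : 'rV[R]_n -> 'rV[R]_m) : Prop :=
  [/\ (forall x, Om x -> {for x, continuous u}),
      (forall i : 'I_m,
         C2_on (posset Om u) (fun x => u x ord0 i) /\
         forall x, posset Om u x ->
           laplacian (fun y => u y ord0 i) x
             = powR (enorm (u x)) (p - 2) * u x ord0 i) &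
      (* (ii) free boundary condition *)
      (forall x0, freebd Om u x0 -> forall f : 'rV[R]_m,
         ~ exists r phi, eball x0 r `<=` Om /\
             bad_test_fn p (fun x => dotp (u x) f) x0 r phi)].

End Defs.

(* Main.v *)
Require Import Defs.
From HB Require Import structures.
From mathcomp Require Import all_boot all_order all_algebra.
From mathcomp Require Import all_classical all_reals all_analysis.
From mathcomp Require Import ring lra.
Import Order.TTheory GRing.Theory Num.Theory.
Import numFieldNormedType.Exports.
Local Open Scope classical_set_scope.
Local Open Scope ring_scope.

Section Aux.
Set Implicit Arguments.
Variable R : realType.
Implicit Types x y t : R.

Lemma pmono (r x y : R) : 0 <= r -> 0 <= x -> x <= y -> powR x r <= powR y r.
Proof.
move=> r0 x0 xy; apply: (ge0_ler_powR r0) => //; rewrite nnegrE //.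
exact: le_trans xy.
Qed.

Lemma superadd (k x y : R) : 1 <= k -> 0 <= x -> 0 <= y ->
  powR x k + powR y k <= powR (x + y) k.
Proof.
move=> k1 x0 y0.
have k0 : 0 < k by lra.
rewrite -(mulr_powRB1 x0 k0) -(mulr_powRB1 y0 k0) -(mulr_powRB1 (addr_ge0 x0 y0) k0).
rewrite mulrDl; apply: lerD; apply: ler_wpM2l => //; apply: pmono; lra.
Qed.

Lemma kappa_gt1 (p : R) : 0 < p < 1 -> 1 < kappa p.
Proof.
move=> /andP[p0 p1]; rewrite /kappa ltr_pdivlMr; lra.
Qed.

Lemma cp_gt0 (p : R) : 0 < p < 1 -> 0 < cp p.
Proof.
move=> hp; have k1 := @kappa_gt1 p hp; rewrite /cp; apply: powR_gt0.
apply: mulr_gt0; lra.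
Qed.

Lemma u0_ge0 (p t : R) : 0 < p < 1 -> 0 <= u0 p t.
Proof. by move=> hp; rewrite /u0 mulr_ge0 ?powR_ge0 // ltW // (@cp_gt0 p). Qed.

Lemma u0_pos (p t : R) : 0 <= t -> u0 p t = cp p * powR t (kappa p).
Proof. by move=> t0; rewrite /u0 max_l. Qed.

Lemma u0_neg (p t : R) : 0 < p < 1 -> t <= 0 -> u0 p t = 0.
Proof.
move=> hp t0; have k1 := @kappa_gt1 p hp.
rewrite /u0 max_r // powR0 ?mulr0 //; apply/negP => /eqP; lra.
Qed.

Lemma u0_mono (p s t : R) : 0 < p < 1 -> s <= t -> u0 p s <= u0 p t.
Proof.
move=> hp st; have k1 := @kappa_gt1 p hp; rewrite /u0.
apply: ler_wpM2l; first exact: ltW (@cp_gt0 p hp).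
apply: pmono; first lra.
  by rewrite le_max lexx orbT.
rewrite ge_max; apply/andP; split; rewrite le_max ?lexx ?orbT //.
by rewrite st.
Qed.


Definition epsone (p : R) : R :=
  Num.min (powR (1/2) (1 / (1 - 1/(2 * kappa p))))
          (powR (cp p * powR (1/2) (kappa p)) 2).

Lemma epsone_gt0 (p : R) : 0 < p < 1 -> 0 < epsone p.
Proof.
move=> hp; rewrite /epsone lt_min; apply/andP; split; apply: powR_gt0 => //.
by apply: mulr_gt0; [exact: (@cp_gt0 p hp) | apply: powR_gt0].
Qed.

Lemma L1 (p eps : R) : 0 < p < 1 -> 0 < eps -> eps <= epsone p ->
  eps <= powR eps (1/(2 * kappa p)) / 2.
Proof.
move=> hp e0 ee; have k1 := @kappa_gt1 p hp.
set k := kappa p in k1 *.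
set b := 1 / (2 * k).
have b0 : 0 < b by rewrite /b divr_gt0 //; lra.
have b1 : b < 1/2 by rewrite /b ltr_pdivrMr; lra.
set a := 1 - b.
have a0 : 0 < a by rewrite /a; lra.
have ea : eps <= powR (1/2) (1/a).
  by apply: le_trans ee _; rewrite /epsone ge_min lexx.
have E : (eps = powR eps b * powR eps a).
  rewrite -powRD; last by apply/implyP => _; rewrite gt_eqF.
  by rewrite /a addrC subrK powRr1 // ltW.
rewrite {1}E; apply: le_trans (_ : _ <= powR eps b * (1/2)) _; last lra.
apply: ler_wpM2l; first by rewrite powR_ge0.
apply: le_trans (pmono _ _ _ (ltW a0) (ltW e0) ea) _.
rewrite -powRrM.
have -> : 1 / a * a = 1 by rewrite div1r mulVf // gt_eqF.
by rewrite powRr1 //; lra.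
Qed.

Lemma L2 (p eps : R) : 0 < p < 1 -> 0 < eps -> eps <= epsone p ->
  eps <= u0 p (powR eps (1/(2 * kappa p)) / 2).
Proof.
move=> hp e0 ee; have k1 := @kappa_gt1 p hp; have c0 := @cp_gt0 p hp.
set k := kappa p in k1 *.
set C := cp p * powR (1/2) k.
have C0 : 0 < C by rewrite /C mulr_gt0 // powR_gt0.
have eC : eps <= powR C 2 by apply: le_trans ee _; rewrite /epsone ge_min lexx orbT.
rewrite u0_pos; last by rewrite divr_ge0 ?powR_ge0.
have E2 : powR eps (1 / (2 * k)) / 2 = powR eps (1 / (2 * k)) * (1/2).
  by rewrite [X in _ = _ * X]mul1r.
rewrite E2.
rewrite powRM; [|exact: powR_ge0|lra].
rewrite -powRrM.
have k0 : k != 0 by rewrite gt_eqF //; lra.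
have -> : (1 / (2 * k) * k = 1/2) by field.
set s := powR eps (1/2).
have ss : eps = s * s.
  rewrite -powRD; last by apply/implyP => _; rewrite gt_eqF.
  have -> : (1/2 + 1/2 = 1 :> R) by field.
  by rewrite powRr1 // ltW.
have sC : s <= C.
  apply: le_trans (pmono _ _ _ _ (ltW e0) eC) _; first lra.
  rewrite -powRrM; have -> : (2 * (1/2) = 1 :> R) by field.
  by rewrite powRr1 // ltW.
rewrite {1}ss.
have -> : cp p * (s * powR (1/2) k) = s * C by rewrite /C; ring.
by apply: ler_wpM2l => //; rewrite /s powR_ge0.
Qed.

Lemma key (p eps t : R) : 0 < p < 1 -> 0 < eps -> eps <= epsone p -> - eps <= t ->
  u0 p t + eps <= u0 p (t + powR eps (1/(2 * kappa p))).
Proof.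
move=> hp e0 ee te.
have l1 := @L1 p eps hp e0 ee; have l2 := @L2 p eps hp e0 ee.
have k1 := @kappa_gt1 p hp; have c0 := @cp_gt0 p hp.
move: l1 l2; set d := powR eps (1/(2 * kappa p)) => l1 l2.
have d0 : 0 < d by rewrite /d powR_gt0.
case: (leP 0 t) => t0.
  have h1 : u0 p (d/2) <= u0 p d by apply: u0_mono => //; lra.
  have hd2 : 0 <= d / 2 by lra.
  have htd : 0 <= t + d by lra.
  rewrite (u0_pos p _ hd2) (u0_pos p _ (ltW d0)) in h1.
  rewrite (u0_pos p _ hd2) in l2.
  rewrite (u0_pos p _ t0) (u0_pos p _ htd).
  have := @superadd (kappa p) t d (ltW k1) t0 (ltW d0).
  move=> hs.
  have : cp p * (powR t (kappa p) + powR d (kappa p)) <= cp p * powR (t + d) (kappa p).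
    by apply: ler_wpM2l => //; exact: ltW.
  rewrite mulrDr; lra.
rewrite (@u0_neg p t hp (ltW t0)) add0r.
apply: (le_trans l2); apply: u0_mono => //; lra.
Qed.

Lemma msg0 (x : R) : 0 <= x * x.
Proof. by rewrite -expr2 sqr_ge0. Qed.

Lemma vec_bound (m' : nat) (w : 'rV[R]_m'.+1) (a : R) :
  enorm (w + a *: f1 R m'.+1) <= enorm w + `|a| /\
  a - enorm w <= coord1 (w + a *: f1 R m'.+1).
Proof.
set S := \sum_(i < m') w ord0 (lift ord0 i) * w ord0 (lift ord0 i).
set w0 := w ord0 ord0.
have S0 : 0 <= S by apply: sumr_ge0 => i _; exact: msg0.
have Ew : dotp w w = w0 * w0 + S by rewrite /dotp big_ord_recl.
have Ev : dotp (w + a *: f1 R m'.+1) (w + a *: f1 R m'.+1) = (w0 + a) * (w0 + a) + S.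
  rewrite /dotp big_ord_recl !mxE /= mulr1; congr (_ + _).
  by apply: eq_bigr => i _; rewrite !mxE /= mulr0 addr0.
have Ec : coord1 (w + a *: f1 R m'.+1) = w0 + a by rewrite /coord1 !mxE /= mulr1.
set N := enorm w.
have N0 : 0 <= N by rewrite /N /enorm sqrtr_ge0.
have NN : N ^+ 2 = w0 * w0 + S.
  by rewrite /N /enorm sqr_sqrtr ?Ew // addr_ge0 // msg0.
have w0N : `|w0| <= N.
  rewrite /N /enorm Ew -sqrtr_sqr ler_sqrt; last by rewrite addr_ge0 // msg0.
  rewrite expr2; lra.
split; last first.
  rewrite Ec; have := ler_norm (- w0); rewrite normrN; lra.
rewrite /enorm Ev -/(enorm w) -/N.
have h0 : 0 <= N + `|a| by rewrite addr_ge0.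
rewrite -(ger0_norm h0) -sqrtr_sqr ler_sqrt; last exact: sqr_ge0.
have ha : w0 * a <= `|w0| * `|a| by rewrite -normrM ler_norm.
have ha2 : `|a| ^+ 2 = a ^+ 2 by rewrite real_normK // num_real.
have an : 0 <= `|a| by [].
nra.
Qed.

End Aux.

Theorem lemma4p2 (R : realType) (n m : nat) (p : R) :
  (2 <= n)%N -> (1 <= m)%N -> 0 < p < 1 ->
  exists eps1 : R, 0 < eps1 /\
  forall eps : R, 0 < eps -> eps <= eps1 ->
  forall u : 'rV[R]_n -> 'rV[R]_m,
    viscosity_solution p (@B1 R n) u ->
    (forall x, B1 x -> enorm (u x - u0 p (xn x) *: f1 R m) <= eps) ->
    (forall x, B1 x -> xn x < - eps -> enorm (u x) = 0) ->
    (forall x, B1 x ->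
       enorm (u x) <= u0 p (xn x + powR eps (1 / (2 * kappa p)))) /\
    (forall x, B1 x -> powR eps (1 / (2 * kappa p)) <= xn x ->
       u0 p (xn x - powR eps (1 / (2 * kappa p))) <= coord1 (u x)).
Proof.
move=> _ hm hp; exists (epsone R p); split; first exact: (@epsone_gt0 R p hp).
move=> eps e0 ee u _ hu hz.
case: m hm u hu hz => [//|m'] _ u hu hz.
have hv : forall x, u x = (u x - u0 p (xn x) *: f1 R m'.+1) + u0 p (xn x) *: f1 R m'.+1.
  by move=> x; rewrite subrK.
split => x Bx.
  case: (ltP (xn x) (- eps)) => hx.
    by rewrite hz // (@u0_ge0 R p _ hp).
  have [h1 _] := @vec_bound R m' (u x - u0 p (xn x) *: f1 R m'.+1) (u0 p (xn x)).
  rewrite -hv ger0_norm ?(@u0_ge0 R p _ hp) // in h1.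
  have := hu x Bx; have := @key R p eps _ hp e0 ee hx; lra.
move=> hx.
have [_ h2] := @vec_bound R m' (u x - u0 p (xn x) *: f1 R m'.+1) (u0 p (xn x)).
rewrite -hv in h2.
have e' : - eps <= xn x - powR eps (1 / (2 * kappa p)).
  have : 0 <= xn x - powR eps (1 / (2 * kappa p)) by lra.
  lra.
have := @key R p eps _ hp e0 ee e'; rewrite subrK.
have := hu x Bx; lra.
Qed.
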